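(* Let $p,q\in\mathbb{K}[z]$ with $q\neq 0$ and $p/q$ a rational invariant. Then $p(Z)\,q(z)-q(Z)\,p(z)\in O$.
   Context: Let $\mathbb{K}$ be an algebraically closed field; $\lambda=(\lambda_1,\dots,\lambda_l)$, $z=(z_1,\dots,z_n)$, $Z=(Z_1,\dots,Z_n)$ indeterminates. An algebraic group $\mathcal{G}\subset\mathbb{K}^l$ is the variety of a radical unmixed-dimensional ideal $G\subset\mathbb{K}[\lambda]$ with polynomial group operations and neutral element $e$. A rational action is $g=(g_1,\dots,g_n)$, $g_i\in h^{-1}\mathbb{K}[\lambda,z]$, with $g(e,\bar z)=\bar z$ and $g(\bar\mu,g(\bar\lambda,\bar z))=g(\bar\mu\cdot\bar\lambda,\bar z)$ whenever both sides are defined; assume (i) for every $\bar z$, $h(\lambda,\bar z)$ is not a zero divisor modulo $G$, (ii) for every $\bar\lambda\in\mathcal{G}$ some $(\bar\lambda,\bar z)$ lies in the domain of $g$. $O=\big(G+(Z-g(\lambda,z))\big)\cap\mathbb{K}[z,Z]$, the sum being an ideal of $h^{-1}\mathbb{K}[\lambda,z,Z]$. A rational invariant is $r\in\mathbb{K}(z)$ with $r(g(\lambda,z))=r(z)$ modulo $G$. *)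

(* Defs.v *)
From HB Require Import structures.
From mathcomp Require Import all_boot all_order all_algebra.
From mathcomp Require Import fraction.
From mathcomp Require Import mpoly.
Set Implicit Arguments. Unset Strict Implicit. Unset Printing Implicit Defensive.
Import Order.TTheory GRing.Theory.
Local Open Scope ring_scope.

Notation "x %:F" := (@FracField.tofrac _ x) : ring_scope.

Definition is_ideal (R : comNzRingType) (I : R -> Prop) : Prop :=
  I 0 /\ (forall a b, I a -> I b -> I (a + b)) /\ (forall r a, I a -> I (r * a)).

Definition radical_ideal (R : comNzRingType) (I : R -> Prop) : Prop :=
  is_ideal I /\ forall (f : R) (k : nat), I (f ^+ k) -> I f.

Definition prime_ideal (R : comNzRingType) (P : R -> Prop) : Prop :=
  is_ideal P /\ ~ P 1 /\ forall a b, P (a * b) -> P a \/ P b.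

Definition subideal (R : comNzRingType) (I J : R -> Prop) : Prop :=
  forall x, I x -> J x.

Definition minimal_prime_over (R : comNzRingType) (I P : R -> Prop) : Prop :=
  prime_ideal P /\ subideal I P /\
  forall Q, prime_ideal Q -> subideal I Q -> subideal Q P -> subideal P Q.

Definition prime_chain_from (R : comNzRingType) (P : R -> Prop) (d : nat) : Prop :=
  exists C : nat -> R -> Prop,
    (forall x, C 0%N x <-> P x) /\
    (forall i, (i <= d)%N -> prime_ideal (C i)) /\
    (forall i, (i < d)%N -> subideal (C i) (C i.+1) /\ ~ subideal (C i.+1) (C i)).

(* Krull dimension of R/P for a prime P: maximal length of a prime chain from P *)
Definition prime_dim (R : comNzRingType) (P : R -> Prop) (d : nat) : Prop :=
  prime_chain_from P d /\ ~ prime_chain_from P d.+1.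

(* unmixed-dimensional (for a radical ideal): all minimal primes over I
   (= all irreducible components of its variety) have the same dimension *)
Definition unmixed_dim (R : comNzRingType) (I : R -> Prop) : Prop :=
  exists d, forall P, minimal_prime_over I P -> prime_dim P d.

Definition is_zero_divisor_mod (R : comNzRingType) (I : R -> Prop) (a : R) : Prop :=
  exists b, ~ I b /\ I (a * b).

(* Localization h^{-1} R inside the fraction field of the domain R.    *)

Definition in_loc (R : idomainType) (h : R) (x : {fraction R}) : Prop :=
  exists (a : R) (m : nat), x = a%:F / (h%:F) ^+ m.

Definition loc_gen_ideal (R : idomainType) (h : R) (S : {fraction R} -> Prop)
  (x : {fraction R}) : Prop :=
  exists (k : nat) (c s : 'I_k -> {fraction R}),
    (forall i, in_loc h (c i)) /\ (forall i, S (s i)) /\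
    x = \sum_(i < k) c i * s i.

(* K[lambda] = {mpoly K[l]}, K[lambda,z] = {mpoly K[l+n]} (lambda first),
   K[z] = {mpoly K[n]}, K[z,Z] = {mpoly K[n+n]} (z first),
   K[lambda,z,Z] = {mpoly K[l+n+n]} (lambda, then z, then Z).          *)

Section Setting.
Variable K : fieldType.

Definition pair_pt (a b : nat) (u : 'I_a -> K) (v : 'I_b -> K) : 'I_(a + b) -> K :=
  fun k => match split k with inl i => u i | inr j => v j end.

Definition subst (a b : nat) (s : 'I_a -> {mpoly K[b]}) (p : {mpoly K[a]}) : {mpoly K[b]} :=
  mmap (@mpolyC b K) s p.

Definition in_variety (l : nat) (G : {mpoly K[l]} -> Prop) (x : 'I_l -> K) : Prop :=
  forall f, G f -> f.@[x] = 0.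

Definition gmul (l : nat) (mu : 'I_l -> {mpoly K[l + l]}) (x y : 'I_l -> K) : 'I_l -> K :=
  fun i => (mu i).@[pair_pt x y].

Definition ginv (l : nat) (iv : 'I_l -> {mpoly K[l]}) (x : 'I_l -> K) : 'I_l -> K :=
  fun i => (iv i).@[x].

Definition algebraic_group (l : nat) (G : {mpoly K[l]} -> Prop)
  (mu : 'I_l -> {mpoly K[l + l]}) (iv : 'I_l -> {mpoly K[l]}) (e : 'I_l -> K) : Prop :=
  let V := in_variety G in
  [/\ V e,
      (forall x y, V x -> V y -> V (gmul mu x y)),
      (forall x, V x -> V (ginv iv x)),
      (forall x y w, V x -> V y -> V w ->
          gmul mu (gmul mu x y) w =1 gmul mu x (gmul mu y w))
    & (forall x, V x -> [/\ gmul mu e x =1 x, gmul mu x e =1 x,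
                            gmul mu (ginv iv x) x =1 e & gmul mu x (ginv iv x) =1 e])].

Definition act_defined (l n : nat) (h : {mpoly K[l + n]}) (x : 'I_l -> K) (z : 'I_n -> K) : Prop :=
  h.@[pair_pt x z] != 0.

Definition act_val (l n : nat) (h : {mpoly K[l + n]}) (N : 'I_n -> {mpoly K[l + n]})
  (ex : 'I_n -> nat) (x : 'I_l -> K) (z : 'I_n -> K) : 'I_n -> K :=
  fun i => (N i).@[pair_pt x z] / (h.@[pair_pt x z]) ^+ ex i.

Definition h_at (l n : nat) (h : {mpoly K[l + n]}) (z : 'I_n -> K) : {mpoly K[l]} :=
  subst (fun k : 'I_(l + n) => match split k with inl i => 'X_i | inr j => (z j)%:MP end) h.

Definition rational_action (l n : nat) (G : {mpoly K[l]} -> Prop)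
  (mu : 'I_l -> {mpoly K[l + l]}) (e : 'I_l -> K)
  (h : {mpoly K[l + n]}) (N : 'I_n -> {mpoly K[l + n]}) (ex : 'I_n -> nat) : Prop :=
  let V := in_variety G in
  let g := act_val h N ex in
  [/\ (forall z, act_defined h e z -> g e z =1 z),
      (forall x y z, V x -> V y ->
          act_defined h y z -> act_defined h x (g y z) ->
          act_defined h (gmul mu x y) z ->
          g x (g y z) =1 g (gmul mu x y) z),
      (forall z, ~ is_zero_divisor_mod G (h_at h z))
    &
      (forall x, V x -> exists z, act_defined h x z)].

Definition embL (l n : nat) (f : {mpoly K[l]}) : {mpoly K[l + n]} :=
  subst (fun i => 'X_(lshift n i)) f.
Definition embz (l n : nat) (f : {mpoly K[n]}) : {mpoly K[l + n]} :=
  subst (fun j => 'X_(rshift l j)) f.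
Definition embLz (l n : nat) (f : {mpoly K[l + n]}) : {mpoly K[l + n + n]} :=
  subst (fun k => 'X_(lshift n k)) f.
Definition embzZ (l n : nat) (f : {mpoly K[n + n]}) : {mpoly K[l + n + n]} :=
  subst (fun k : 'I_(n + n) => match split k with
           | inl j => 'X_(lshift n (rshift l j))
           | inr j => 'X_(rshift (l + n) j) end) f.
Definition as_z (n : nat) (p : {mpoly K[n]}) : {mpoly K[n + n]} :=
  subst (fun j => 'X_(lshift n j)) p.
Definition as_Z (n : nat) (p : {mpoly K[n]}) : {mpoly K[n + n]} :=
  subst (fun j => 'X_(rshift n j)) p.

Definition g_frac (l n : nat) (h : {mpoly K[l + n]}) (N : 'I_n -> {mpoly K[l + n]})
  (ex : 'I_n -> nat) (i : 'I_n) : {fraction {mpoly K[l + n]}} :=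
  (N i)%:F / (h%:F) ^+ ex i.

Definition comp_g (l n : nat) (h : {mpoly K[l + n]}) (N : 'I_n -> {mpoly K[l + n]})
  (ex : 'I_n -> nat) (p : {mpoly K[n]}) : {fraction {mpoly K[l + n]}} :=
  mmap (fun c : K => (c%:MP : {mpoly K[l + n]})%:F) (g_frac h N ex) p.

(* p/q is a rational invariant: p(g(lambda,z)) / q(g(lambda,z)) = p(z)/q(z)
   modulo G, read with denominators cleared in h^{-1}K[lambda,z]:
   p(g) q(z) - q(g) p(z) lies in the ideal generated by G there. *)
Definition rational_invariant (l n : nat) (G : {mpoly K[l]} -> Prop)
  (h : {mpoly K[l + n]}) (N : 'I_n -> {mpoly K[l + n]}) (ex : 'I_n -> nat)
  (p q : {mpoly K[n]}) : Prop :=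
  loc_gen_ideal h (fun y => exists f, G f /\ y = (embL n f)%:F)
    (comp_g h N ex p * (embz l q)%:F - comp_g h N ex q * (embz l p)%:F).

(* O = (G + (Z - g(lambda,z))) /\ K[z,Z], the sum taken as an ideal of
   h^{-1}K[lambda,z,Z] *)
Definition orbit_ideal (l n : nat) (G : {mpoly K[l]} -> Prop)
  (h : {mpoly K[l + n]}) (N : 'I_n -> {mpoly K[l + n]}) (ex : 'I_n -> nat)
  (f : {mpoly K[n + n]}) : Prop :=
  let H := embLz h in
  loc_gen_ideal H
    (fun y => (exists f0, G f0 /\ y = (embLz (embL n f0))%:F) \/
              (exists i : 'I_n, y = ('X_(rshift (l + n) i))%:F
                                      - (embLz (N i))%:F / (H%:F) ^+ ex i))
    ((embzZ l f)%:F).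

End Setting.

(* Main.v *)
Require Import Defs.
From HB Require Import structures.
From mathcomp Require Import all_boot all_order all_algebra.
From mathcomp Require Import fraction.
From mathcomp Require Import mpoly.
From mathcomp Require Import generic_quotient.
From mathcomp Require Import ring.
Set Implicit Arguments. Unset Strict Implicit. Unset Printing Implicit Defensive.
Import GRing.Theory.
Local Open Scope ring_scope.

Lemma frac_repr (R : idomainType) (x : {fraction R}) :
  exists ab : R * R, (ab.2 != 0) && (x == ab.1%:F / ab.2%:F).
Proof.
elim/quotW: x => r.
exists (\n_r, \d_r) => /=; rewrite denom_ratioP /=.
have H : (\d_r)%:F * (\pi_({fraction R}) r)%qT = (\n_r)%:F.
  unlock FracField.tofrac.
  rewrite -[LHS]FracField.pi_mul.
  apply/eqmodP => /=. rewrite FracField.equivfE /=.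
  rewrite /FracField.mulf /=. rewrite !numden_Ratio ?mulf_neq0 ?oner_neq0 ?denom_ratioP //.
  by rewrite mulr1 mul1r mulrC.
by apply/eqP; rewrite -H mulrAC mulfV ?mul1r // tofrac_eq0 denom_ratioP.

Qed.

Section FracMap.
Variables (R S : idomainType) (f : {rmorphism R -> S}) (finj : injective f).

Definition fmap (x : {fraction R}) : {fraction S} :=
  let ab := xchoose (frac_repr x) in (f ab.1)%:F / (f ab.2)%:F.

Lemma f_neq0 b : b != 0 -> f b != 0.
Proof. by move=> nb; apply: contra nb; rewrite -(rmorph0 f) => /eqP /finj ->. Qed.

Lemma tf_neq0 (T : idomainType) (b : T) : b != 0 -> b%:F != 0.
Proof. by rewrite tofrac_eq0. Qed.

Lemma fmapE a b : b != 0 -> fmap (a%:F / b%:F) = (f a)%:F / (f b)%:F.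
Proof.
move=> nb; rewrite /fmap.
move: (xchooseP (frac_repr (a%:F / b%:F))).
case: (xchoose _) => a' b' /= /andP[nb' /eqP e].
have e2 : a * b' = a' * b.
  apply/eqP; rewrite -tofrac_eq !tofracM -eqr_div ?tf_neq0 //; exact/eqP.
apply/eqP; rewrite eqr_div ?tf_neq0 ?f_neq0 // -!tofracM -!rmorphM e2 //.
Qed.

Lemma fmap_tofrac a : fmap a%:F = (f a)%:F.
Proof.
by rewrite -[a%:F]divr1 -tofrac1 fmapE ?oner_neq0 // rmorph1 tofrac1 divr1.
Qed.

Lemma fmapD x y : fmap (x + y) = fmap x + fmap y.
Proof.
have [[a b] /= /andP[nb /eqP ->]] := frac_repr x.
have [[c d] /= /andP[nd /eqP ->]] := frac_repr y.
have e : a%:F / b%:F + c%:F / d%:F = (a * d + c * b)%:F / (b * d)%:F.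
  by rewrite (addf_div _ _ (tf_neq0 nb) (tf_neq0 nd)) tofracD !tofracM.
rewrite e (fmapE _ (mulf_neq0 nb nd)) (fmapE _ nb) (fmapE _ nd).
rewrite (addf_div _ _ (tf_neq0 (f_neq0 nb)) (tf_neq0 (f_neq0 nd))).
by rewrite rmorphD !rmorphM tofracD !tofracM.
Qed.

Lemma fmapM x y : fmap (x * y) = fmap x * fmap y.
Proof.
have [[a b] /= /andP[nb /eqP ->]] := frac_repr x.
have [[c d] /= /andP[nd /eqP ->]] := frac_repr y.
have e : a%:F / b%:F * (c%:F / d%:F) = (a * c)%:F / (b * d)%:F.
  by rewrite mulf_div !tofracM.
rewrite e (fmapE _ (mulf_neq0 nb nd)) (fmapE _ nb) (fmapE _ nd).
by rewrite mulf_div !rmorphM.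
Qed.

Lemma fmapN x : fmap (- x) = - fmap x.
Proof.
have [[a b] /= /andP[nb /eqP ->]] := frac_repr x.
have e : - (a%:F / b%:F) = (- a)%:F / b%:F by rewrite tofracN mulNr.
by rewrite e (fmapE _ nb) (fmapE _ nb) rmorphN tofracN mulNr.
Qed.

Lemma fmap1 : fmap 1 = 1.
Proof. by rewrite -tofrac1 fmap_tofrac rmorph1. Qed.

Lemma fmap0 : fmap 0 = 0.
Proof. by rewrite -tofrac0 fmap_tofrac rmorph0. Qed.

Lemma fmapV x : fmap x^-1 = (fmap x)^-1.
Proof.
have [[a b] /= /andP[nb /eqP ->]] := frac_repr x.
have [->|na] := eqVneq a 0.
  by rewrite tofrac0 mul0r invr0 fmap0 invr0.
rewrite invf_div (fmapE _ na) (fmapE _ nb) invf_div //.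
Qed.
Lemma fmapX x k : fmap (x ^+ k) = (fmap x) ^+ k.
Proof. by elim: k => [|k IH]; rewrite ?expr0 ?fmap1 // !exprS fmapM IH. Qed.
End FracMap.

Lemma split_l m n (i : 'I_m) : split (lshift n i) = inl i.
Proof. exact: (unsplitK (inl _ i)). Qed.
Lemma split_r m n (i : 'I_n) : split (rshift m i) = inr i.
Proof. exact: (unsplitK (inr _ i)). Qed.

Lemma mmap_ext n (R S : ringType) (f1 f2 : R -> S) (s1 s2 : 'I_n -> S) p :
  f1 =1 f2 -> s1 =1 s2 -> mmap f1 s1 p = mmap f2 s2 p.
Proof.
move=> ef es; rewrite /mmap; apply: eq_bigr => m _.
by rewrite ef (mmap1_eq _ es).
Qed.

Lemma mmap_comm n (R S T : ringType) (c : R -> S) (s : 'I_n -> S) (g : S -> T) :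
  g 0 = 0 -> {morph g : x y / x + y} -> g 1 = 1 -> {morph g : x y / x * y} ->
  forall p, g (mmap c s p) = mmap (g \o c) (g \o s) p.
Proof.
move=> g0 gD g1 gM p; rewrite /mmap (big_morph g gD g0); apply: eq_bigr => m _.
rewrite gM /mmap1 (big_morph g gM g1); congr (_ * _); apply: eq_bigr => i _ /=.
by elim: (m i) => [|k IH]; rewrite ?expr0 ?g1 // !exprS gM IH.
Qed.

Lemma mmap_commR n (R S T : comNzRingType) (c : R -> S) (s : 'I_n -> S) (g : {rmorphism S -> T}) p :
  g (mmap c s p) = mmap (g \o c) (g \o s) p.
Proof. apply: mmap_comm; [exact: rmorph0|exact: rmorphD|exact: rmorph1|exact: rmorphM]. Qed.

Section S.
Variable K : fieldType.

Lemma subst_X a b (s : 'I_a -> {mpoly K[b]}) i : subst s 'X_i = s i.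
Proof. by rewrite /subst mmapX mmap1U. Qed.

Lemma subst_C a b (s : 'I_a -> {mpoly K[b]}) c : subst s c%:MP = c%:MP.
Proof. by rewrite /subst mmapC. Qed.

Lemma subst_comp a b c (s1 : 'I_a -> {mpoly K[b]}) (s2 : 'I_b -> {mpoly K[c]}) p :
  subst s2 (subst s1 p) = subst (fun i => subst s2 (s1 i)) p.
Proof.
rewrite {1}/subst (mmap_commR _ _ (subst s2)); apply: mmap_ext => // x /=.
exact: subst_C.
Qed.

Lemma subst_id a p : subst (fun i : 'I_a => 'X_i) p = p :> {mpoly K[a]}.
Proof.
rewrite -[RHS](comp_mpoly_id p) /comp_mpoly /subst; apply: mmap_ext => // i.
by rewrite tnth_mktuple.
Qed.

Lemma tofrac_subst a b (s : 'I_a -> {mpoly K[b]}) p :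
  (subst s p)%:F = mmap (fun c => (c%:MP : {mpoly K[b]})%:F) (fun i => (s i)%:F) p.
Proof. by rewrite /subst (mmap_commR _ _ (@FracField.tofrac _)). Qed.

Lemma embLz_inj l n : injective (fun p : {mpoly K[l + n]} => embLz p).
Proof.
pose psi : {mpoly K[l + n + n]} -> {mpoly K[l + n]} := subst (fun k : 'I_(l + n + n) => match split k with inl i => 'X_i | inr _ => 0 end).
have K1 (p : {mpoly K[l + n]}) : psi (embLz p) = p.
  rewrite /psi /embLz subst_comp -[RHS]subst_id; apply: mmap_ext => // i.
  by rewrite subst_X split_l.
by move=> p q e; rewrite -(K1 p) -(K1 q) e.
Qed.

End S.

Section Loc.
Variables (R : idomainType) (h : R) (Sg : {fraction R} -> Prop).

Lemma in_loc_tofrac a : in_loc h a%:F.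
Proof. by exists a, 0%N; rewrite expr0 divr1. Qed.

Lemma in_loc_h0 x : h = 0 -> in_loc h x -> exists a, x = a%:F.
Proof.
move=> -> [a [[|m] ->]]; first by exists a; rewrite expr0 divr1.
by exists 0; rewrite tofrac0 expr0n /= invr0 mulr0.
Qed.

Lemma in_locD x y : in_loc h x -> in_loc h y -> in_loc h (x + y).
Proof.
have [h0|nh] := eqVneq h 0.
  move=> /(in_loc_h0 h0) [a ->] /(in_loc_h0 h0) [b ->].
  by rewrite -tofracD; apply: in_loc_tofrac.
have nhF : h%:F != 0 by rewrite tofrac_eq0.
move=> [a [m ->]] [b [k ->]]; exists (a * h ^+ k + b * h ^+ m), (m + k)%N.
rewrite (addf_div _ _ (expf_neq0 m nhF) (expf_neq0 k nhF)).
by rewrite tofracD !tofracM !tofracXn exprD.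
Qed.

Lemma in_locM x y : in_loc h x -> in_loc h y -> in_loc h (x * y).
Proof.
move=> [a [m ->]] [b [k ->]]; exists (a * b), (m + k)%N.
by rewrite rmorphM exprD /= invfM mulrACA.
Qed.

Lemma in_locN x : in_loc h x -> in_loc h (- x).
Proof. by move=> [a [m ->]]; exists (- a), m; rewrite rmorphN mulNr. Qed.

Lemma in_loc0 : in_loc h 0.
Proof. by rewrite -tofrac0; apply: in_loc_tofrac. Qed.
Lemma in_loc1 : in_loc h 1.
Proof. by rewrite -tofrac1; apply: in_loc_tofrac. Qed.

Local Notation J := (loc_gen_ideal h Sg).

Lemma J0 : J 0.
Proof.
exists 0%N, (fun _ => 0), (fun _ => 0).
by split; [case|split; [case|rewrite big_ord0]].
Qed.

Lemma JD x y : J x -> J y -> J (x + y).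
Proof.
move=> [k1 [c1 [s1 [Hc1 [Hs1 ->]]]]] [k2 [c2 [s2 [Hc2 [Hs2 ->]]]]].
exists (k1 + k2)%N,
  (fun i => match split i with inl j => c1 j | inr j => c2 j end),
  (fun i => match split i with inl j => s1 j | inr j => s2 j end).
split; first by move=> i; case: (split i).
split; first by move=> i; case: (split i).
rewrite big_split_ord /=; congr (_ + _); apply: eq_bigr => i _.
  by rewrite (unsplitK (inl _ i)).
by rewrite (unsplitK (inr _ i)).
Qed.

Lemma JM d x : in_loc h d -> J x -> J (d * x).
Proof.
move=> Hd [k [c [s [Hc [Hs ->]]]]].
exists k, (fun i => d * c i), s; split; first by move=> i; apply: in_locM.
split => //.
by rewrite mulr_sumr; apply: eq_bigr => i _; rewrite mulrA.
Qed.

Lemma Jgen y : Sg y -> J y.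
Proof.
move=> Hy; exists 1%N, (fun _ => 1), (fun _ => y); split.
  by move=> _; apply: in_loc1.
split => //.
by rewrite big_ord1 mul1r.
Qed.

Lemma JN x : J x -> J (- x).
Proof. by move=> Hx; rewrite -mulN1r; apply: JM => //; apply/in_locN/in_loc1. Qed.

Lemma JB x y : J x -> J y -> J (x - y).
Proof. by move=> Hx Hy; apply: JD => //; apply: JN. Qed.

Definition Good x y := [/\ in_loc h x, in_loc h y & J (x - y)].

Lemma GoodD x1 y1 x2 y2 : Good x1 x2 -> Good y1 y2 -> Good (x1 + y1) (x2 + y2).
Proof.
move=> [a1 a2 a3] [b1 b2 b3]; split; try exact: in_locD.
have -> : x1 + y1 - (x2 + y2) = (x1 - x2) + (y1 - y2) by rewrite opprD addrACA.
exact: JD.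
Qed.

Lemma GoodM x1 y1 x2 y2 : Good x1 x2 -> Good y1 y2 -> Good (x1 * y1) (x2 * y2).
Proof.
move=> [a1 a2 a3] [b1 b2 b3]; split; try exact: in_locM.
have -> : x1 * y1 - x2 * y2 = x1 * (y1 - y2) + y2 * (x1 - x2).
  by rewrite !mulrBr [y2 * x1]mulrC addrA subrK [y2 * x2]mulrC.
by apply: JD; apply: JM.
Qed.

Lemma Goodrefl x : in_loc h x -> Good x x.
Proof. by move=> Hx; split => //; rewrite subrr; apply: J0. Qed.

Lemma Good_mmap n (A : ringType) (f : A -> {fraction R}) (u v : 'I_n -> {fraction R}) p :
  (forall a, in_loc h (f a)) -> (forall i, Good (u i) (v i)) ->
  Good (mmap f u p) (mmap f v p).
Proof.
move=> Hf Huv; rewrite /mmap; apply: (big_rec2 Good); first exact/Goodrefl/in_loc0.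
move=> m y1 y2 _ Hy; apply: GoodD => //; apply: GoodM; first exact/Goodrefl/Hf.
rewrite /mmap1; apply: (big_rec2 Good); first exact/Goodrefl/in_loc1.
move=> i z1 z2 _ Hz; apply: GoodM => //.
elim: (m i) => [|k IH]; first by rewrite !expr0; apply/Goodrefl/in_loc1.
by rewrite !exprS; apply: GoodM.
Qed.

End Loc.

Lemma alg_id (T : comNzRingType) (a a' b b' x y : T) :
  a * x - b * y = x * (a - a') - y * (b - b') + (a' * x - b' * y).
Proof. ring. Qed.

Lemma substB (K : fieldType) a b (s : 'I_a -> {mpoly K[b]}) p q :
  subst s (p - q) = subst s p - subst s q.
Proof. by rewrite /subst rmorphB. Qed.
Lemma substM (K : fieldType) a b (s : 'I_a -> {mpoly K[b]}) p q :
  subst s (p * q) = subst s p * subst s q.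
Proof. by rewrite /subst rmorphM. Qed.

Theorem mainTheorem3 (K : closedFieldType) (l n : nat)
  (G : {mpoly K[l]} -> Prop)
  (mu : 'I_l -> {mpoly K[l + l]}) (iv : 'I_l -> {mpoly K[l]}) (e : 'I_l -> K)
  (h : {mpoly K[l + n]}) (N : 'I_n -> {mpoly K[l + n]}) (ex : 'I_n -> nat)
  (HG : radical_ideal G) (HGu : unmixed_dim G)
  (Hgrp : algebraic_group G mu iv e)
  (Hact : rational_action G mu e h N ex)
  (p q : {mpoly K[n]}) (Hq : q != 0)
  (Hinv : rational_invariant G h N ex p q) :
  orbit_ideal G h N ex (as_Z p * as_z q - as_Z q * as_z p).
Proof.
pose phi := GRing.RMorphism.clone _ _
  (mmap (@mpolyC (l + n + n) K) (fun k : 'I_(l + n) => 'X_(lshift n k))) _.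
have finj : injective phi by move=> x y E; exact: (embLz_inj E).
have PhiT (a : {mpoly K[l + n]}) : (fmap phi) a%:F = (embLz a)%:F by exact: (fmap_tofrac finj a).
pose Sg := (fun y => (exists f0, G f0 /\ y = (embLz (embL n f0))%:F) \/
              (exists i : 'I_n, y = ('X_(rshift (l + n) i) : {mpoly K[l + n + n]})%:F
                                      - (embLz (N i))%:F / ((embLz h)%:F) ^+ ex i)).
change (loc_gen_ideal (embLz h) Sg
  ((embzZ l (as_Z p * as_z q - as_Z q * as_z p))%:F)).
pose cst2 := fun c : K => ((c%:MP : {mpoly K[l + n + n]}))%:F.
pose XZ := fun i : 'I_n => ('X_(rshift (l + n) i) : {mpoly K[l + n + n]})%:F.
pose gZ := fun i : 'I_n => (embLz (N i))%:F / ((embLz h)%:F) ^+ ex i.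
have Gi i : Good (embLz h) Sg (XZ i) (gZ i).
  split; first exact: in_loc_tofrac.
    by exists (embLz (N i)), (ex i).
  by apply: Jgen; right; exists i.
have Hc c : in_loc (embLz h) (cst2 c) by exact: in_loc_tofrac.
have GP : Good (embLz h) Sg (mmap cst2 XZ p) (mmap cst2 gZ p) by exact: Good_mmap.
have GQ : Good (embLz h) Sg (mmap cst2 XZ q) (mmap cst2 gZ q) by exact: Good_mmap.
have EZ r : (embzZ l (as_Z r))%:F = mmap cst2 XZ r.
  rewrite /embzZ /as_Z subst_comp tofrac_subst; apply: mmap_ext => [c|j] //.
  by rewrite subst_X split_r.
have Ez (r : {mpoly K[n]}) : embzZ l (as_z r) = embLz (embz l r).
  rewrite /embzZ /as_z /embLz /embz !subst_comp; apply: mmap_ext => [c|j] //.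
  by rewrite !subst_X split_l.
have EG r : (fmap phi) (comp_g h N ex r) = mmap cst2 gZ r.
  rewrite /comp_g (mmap_comm _ _ (fmap0 finj) (fmapD finj) (fmap1 finj) (fmapM finj)).
  apply: mmap_ext => [c|i] /=.
    by rewrite PhiT /embLz subst_C.
  by rewrite /g_frac (fmapM finj) (fmapV finj) (fmapX finj) !PhiT.
have JI : loc_gen_ideal (embLz h) Sg
    ((fmap phi) (comp_g h N ex p * (embz l q)%:F - comp_g h N ex q * (embz l p)%:F)).
  move: Hinv; rewrite /rational_invariant => -[k [c [s [Hc' [Hs' ->]]]]].
  exists k, (fun i => (fmap phi) (c i)), (fun i => (fmap phi) (s i)); split.
    move=> i; case: (Hc' i) => a [m ->]; exists (embLz a), m.
    by rewrite (fmapM finj) (fmapV finj) (fmapX finj) !PhiT.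
  split.
    move=> i; case: (Hs' i) => f0 [Gf ->]; left; exists f0; split => //.
  rewrite (big_morph (fmap phi) (fmapD finj) (fmap0 finj)); apply: eq_bigr => i _.
  by rewrite (fmapM finj).
rewrite (fmapD finj) (fmapN finj) !(fmapM finj) !EG !PhiT in JI.
have eB (a b : {mpoly K[n + n]}) : embzZ l (a - b) = embzZ l a - embzZ l b by exact: substB.
have eM (a b : {mpoly K[n + n]}) : embzZ l (a * b) = embzZ l a * embzZ l b by exact: substM.
rewrite (eB (as_Z p * as_z q) (as_Z q * as_z p)).
rewrite (eM (as_Z p) (as_z q)) (eM (as_Z q) (as_z p)).
move: (EZ p) (EZ q) (Ez p) (Ez q).
move: (embzZ l (as_Z p)) (embzZ l (as_Z q)) (embzZ l (as_z p)) (embzZ l (as_z q)).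
move=> P1 Q1 P2 Q2 E1 E2 E3 E4.
rewrite tofracB !tofracM E1 E2 E3 E4.
rewrite (alg_id _ (mmap cst2 gZ p) _ (mmap cst2 gZ q)).
case: GP => _ _ JP; case: GQ => _ _ JQ.
apply: JD => //; apply: JB; apply: JM => //; exact: in_loc_tofrac.
Qed.
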